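(* Let $R$ be a domain and let $G$ be a finite undirected graph without loops with vertex set $A=\{a_1,a_2,\dots,a_n\}$, where $n\geqslant 2$. Let $L(A;G)$ be one of the following Lie $R$-algebras: the partially commutative Lie algebra $\mathcal{L}(A;G)$, the partially commutative metabelian Lie algebra $\mathcal{M}(A;G)$, or the partially commutative nilpotent Lie algebra $\mathcal{N}_m(A;G)$ of degree $m\geqslant 2$. Then $L(A;G)$ splits into a direct sum $L(A;G)=L_1\oplus L_2$ of two non-zero subalgebras $L_1,L_2$ if and only if the complement graph $\overline{G}$ is not connected.
   Context: All Lie algebras are Lie algebras over the domain $R$. For vertices $a,b$ of $G$ write $a\leftrightarrow b$ if $\{a,b\}$ is an edge of $G$. The complement graph $\overline{G}$ has vertex set $A$, and distinct $a,b$ are adjacent in $\overline{G}$ iff they are not adjacent in $G$. For a variety $\mathfrak{M}$ of Lie $R$-algebras, the partially commutative Lie algebra in $\mathfrak{M}$ with defining graph $G$ is the Lie algebra presented in $\mathfrak{M}$ by generators $A$ and defining relations $[a_i,a_j]=0$ for all edges $\{a_i,a_j\}$ of $G$ (no other relations besides the identities of $\mathfrak{M}$). $\mathcal{L}(A;G)$ is obtained for $\mathfrak{M}$ the variety of all Lie algebras, $\mathcal{M}(A;G)$ for the variety of metabelian Lie algebras (identity $[[x,y],[z,t]]=0$), and $\mathcal{N}_m(A;G)$ for the variety of nilpotent Lie algebras of degree $m$ (all Lie products of $m+1$ elements vanish). A decomposition $L=L_1\oplus L_2$ into a direct sum of subalgebras means $L_1,L_2$ are subalgebras, $L$ is the direct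 sum of $L_1$ and $L_2$ as $R$-modules, and $[L_1,L_2]=0$. *)

(* Defs.v *)
From HB Require Import structures.
From mathcomp Require Import all_boot all_order all_algebra.
Set Implicit Arguments. Unset Strict Implicit. Unset Printing Implicit Defensive.
Import GRing.Theory.
Local Open Scope ring_scope.

Structure lieAlgType (R : pzRingType) := LieAlg {
  lie_sort :> lmodType R;
  lie_br : lie_sort -> lie_sort -> lie_sort;
  lie_linl : forall (a : R) (x y z : lie_sort),
      lie_br (a *: x + y) z = a *: lie_br x z + lie_br y z;
  lie_linr : forall (a : R) (x y z : lie_sort),
      lie_br z (a *: x + y) = a *: lie_br z x + lie_br z y;
  lie_alt : forall x : lie_sort, lie_br x x = 0;
  lie_jacobi : forall x y z : lie_sort,
      lie_br x (lie_br y z) + lie_br y (lie_br z x) + lie_br z (lie_br x y) = 0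
}.

Arguments lie_br {R L} : rename.

Definition lie_hom (R : pzRingType) (L L' : lieAlgType R) (f : L -> L') : Prop :=
  (forall (a : R) (x y : L), f (a *: x + y) = a *: f x + f y) /\
  (forall x y : L, f (lie_br x y) = lie_br (f x) (f y)).

Definition lnorm (R : pzRingType) (L : lieAlgType R) (x : L) (s : seq L) : L :=
  foldl (fun u v => lie_br u v) x s.

Inductive pc_kind := PC_all | PC_metabelian | PC_nilpotent of nat.

Definition in_variety (R : pzRingType) (k : pc_kind) (L : lieAlgType R) : Prop :=
  match k with
  | PC_all => True
  | PC_metabelian =>
      forall x y z t : L, lie_br (lie_br x y) (lie_br z t) = 0
  | PC_nilpotent m =>
      forall (x : L) (s : seq L), size s = m -> lnorm x s = 0
  end.

(* L with generators gen : 'I_n -> L is the partially commutative Lie algebra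
   in the variety k with defining graph G: presented in the variety by the
   generators and the relations [a_i,a_j] = 0 for edges {a_i,a_j},
   expressed by the universal property of the presentation. *)
Definition pc_presentation (R : pzRingType) (k : pc_kind) (n : nat)
    (G : rel 'I_n) (L : lieAlgType R) (gen : 'I_n -> L) : Prop :=
  in_variety k L /\
  (forall i j, G i j -> lie_br (gen i) (gen j) = 0) /\
  (forall (L' : lieAlgType R) (g' : 'I_n -> L'),
      in_variety k L' ->
      (forall i j, G i j -> lie_br (g' i) (g' j) = 0) ->
      exists f : L -> L',
        [/\ lie_hom f, (forall i, f (gen i) = g' i) &
            forall f' : L -> L', lie_hom f' -> (forall i, f' (gen i) = g' i) ->
              forall x, f' x = f x]).

Definition lie_subalg (R : pzRingType) (L : lieAlgType R) (S : L -> Prop) : Prop :=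
  [/\ S 0, (forall (a : R) x y, S x -> S y -> S (a *: x + y)) &
      (forall x y, S x -> S y -> S (lie_br x y))].

Definition lie_direct_sum (R : pzRingType) (L : lieAlgType R) (L1 L2 : L -> Prop) : Prop :=
  [/\ lie_subalg L1, lie_subalg L2,
      (forall x : L, exists y z, [/\ L1 y, L2 z & x = y + z]),
      (forall x : L, L1 x -> L2 x -> x = 0) &
      (forall x y : L, L1 x -> L2 y -> lie_br x y = 0)].

Definition compl_graph (n : nat) (G : rel 'I_n) : rel 'I_n :=
  fun i j => (i != j) && ~~ G i j.

Definition graph_connected (n : nat) (E : rel 'I_n) : Prop :=
  forall i j : 'I_n, connect E i j.

(* Main.v *)
Require Import Defs.
From HB Require Import structures.
From mathcomp Require Import all_boot all_order all_algebra.
From mathcomp Require Import boolp.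
From mathcomp Require Import ring zify.
Set Implicit Arguments. Unset Strict Implicit. Unset Printing Implicit Defensive.
Import GRing.Theory.
Local Open Scope ring_scope.

Lemma dbl0 (V : zmodType) (x : V) : x = x + x -> x = 0.
Proof. by move=> h; apply: (addrI x); rewrite addr0 -h. Qed.

Section Basic.
Variables (R : pzRingType) (L : lieAlgType R).
Implicit Types x y z : L.

Lemma br0l y : lie_br (0 : L) y = 0.
Proof.
have := lie_linl 1 (0 : L) 0 y; rewrite !scale1r addr0; exact: dbl0.
Qed.
Lemma br0r y : lie_br y (0 : L) = 0.
Proof.
have := lie_linr 1 (0 : L) 0 y; rewrite !scale1r addr0; exact: dbl0.
Qed.
Lemma brDl x y z : lie_br (x + y) z = lie_br x z + lie_br y z.
Proof. by have := lie_linl 1 x y z; rewrite !scale1r. Qed.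
Lemma brDr x y z : lie_br z (x + y) = lie_br z x + lie_br z y.
Proof. by have := lie_linr 1 x y z; rewrite !scale1r. Qed.
Lemma brZl a x z : lie_br (a *: x) z = a *: lie_br x z.
Proof. by have := lie_linl a x 0 z; rewrite !addr0 br0l addr0. Qed.
Lemma brZr a x z : lie_br z (a *: x) = a *: lie_br z x.
Proof. by have := lie_linr a x 0 z; rewrite !addr0 br0r addr0. Qed.
Lemma brNl x z : lie_br (- x) z = - lie_br x z.
Proof. by rewrite -scaleN1r brZl scaleN1r. Qed.
Lemma brNr x z : lie_br z (- x) = - lie_br z x.
Proof. by rewrite -scaleN1r brZr scaleN1r. Qed.
Lemma brBl x y z : lie_br (x - y) z = lie_br x z - lie_br y z.
Proof. by rewrite brDl brNl. Qed.
Lemma brBr x y z : lie_br z (x - y) = lie_br z x - lie_br z y.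
Proof. by rewrite brDr brNr. Qed.
Lemma br_anti x y : lie_br x y = - lie_br y x.
Proof.
have := lie_alt (x + y); rewrite brDl !brDr !lie_alt add0r addr0 => /eqP.
by rewrite addr_eq0 => /eqP.
Qed.
Lemma br_suml I (r : seq I) (P : pred I) (F : I -> L) y :
  lie_br (\sum_(i <- r | P i) F i) y = \sum_(i <- r | P i) lie_br (F i) y.
Proof. by apply: (big_morph (fun x => lie_br x y)) => [u v|]; rewrite ?brDl ?br0l. Qed.
Lemma br_sumr I (r : seq I) (P : pred I) (F : I -> L) y :
  lie_br y (\sum_(i <- r | P i) F i) = \sum_(i <- r | P i) lie_br y (F i).
Proof. by apply: (big_morph (fun x => lie_br y x)) => [u v|]; rewrite ?brDr ?br0r. Qed.
End Basic.

Section Hom.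
Variables (R : pzRingType) (L L' : lieAlgType R) (f : L -> L').
Hypothesis hf : lie_hom f.
Lemma hom0 : f 0 = 0.
Proof.
have := hf.1 1 0 0; rewrite !scale1r addr0; exact: dbl0.
Qed.
Lemma homD x y : f (x + y) = f x + f y.
Proof. by have := hf.1 1 x y; rewrite !scale1r. Qed.
Lemma homZ a x : f (a *: x) = a *: f x.
Proof. by have := hf.1 a x 0; rewrite !addr0 hom0 addr0. Qed.
Lemma homN x : f (- x) = - f x.
Proof. by rewrite -scaleN1r homZ scaleN1r. Qed.
Lemma homB x y : f (x - y) = f x - f y.
Proof. by rewrite homD homN. Qed.
Lemma homBr x y : f (lie_br x y) = lie_br (f x) (f y).
Proof. exact: hf.2. Qed.
Lemma hom_sum I (r : seq I) (P : pred I) (F : I -> L) :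
  f (\sum_(i <- r | P i) F i) = \sum_(i <- r | P i) f (F i).
Proof. by apply: (big_morph f) => [u v|]; rewrite ?homD ?hom0. Qed.
End Hom.

Lemma hom_id (R : pzRingType) (L : lieAlgType R) : lie_hom (@id L).
Proof. by []. Qed.
Lemma hom_comp (R : pzRingType) (L1 L2 L3 : lieAlgType R) (f : L1 -> L2) (g : L2 -> L3) :
  lie_hom f -> lie_hom g -> lie_hom (g \o f).
Proof.
move=> hf hg; split=> [a x y|x y] /=; first by rewrite hf.1 hg.1.
by rewrite hf.2 hg.2.
Qed.

Inductive Gen (R : pzRingType) (L : lieAlgType R) (n : nat) (gen : 'I_n -> L) : L -> Prop :=
| Gg i : Gen gen (gen i)
| G0 : Gen gen 0
| Glin a x y : Gen gen x -> Gen gen y -> Gen gen (a *: x + y)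
| Gbr x y : Gen gen x -> Gen gen y -> Gen gen (lie_br x y).

Section SubGen.
Variables (R : pzRingType) (L : lieAlgType R) (n : nat) (gen : 'I_n -> L).
Definition genP : pred L := fun x => `[< Gen gen x >].
Lemma genP_closed : subsemimod_closed genP.
Proof.
split; first split.
- by apply/asboolP; exact: G0.
- move=> x y /asboolP hx /asboolP hy; apply/asboolP.
  by rewrite -[x]scale1r; apply: Glin.
- move=> a x /asboolP hx; apply/asboolP.
  by rewrite -[_ *: _]addr0; apply: Glin => //; exact: G0.
Qed.
Record gsub := GSub { gval : L; gvalP : genP gval }.
HB.instance Definition _ := [isSub for gval].
HB.instance Definition _ := [Choice of gsub by <:].
HB.instance Definition _ := GRing.SubChoice_isSubLmodule.Build R L genP gsub genP_closed.

Lemma gval_lin a (x y : gsub) : gval (a *: x + y) = a *: gval x + gval y.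
Proof. by []. Qed.
End SubGen.

Section SubLie.
Variables (R : pzRingType) (L : lieAlgType R) (n : nat) (gen : 'I_n -> L).
Local Notation T := (gsub gen).
Definition gbr (x y : T) : T :=
  GSub (asboolT (Gbr (asboolW (gvalP x)) (asboolW (gvalP y)))).
Lemma gbr_val (x y : T) : gval (gbr x y) = lie_br (gval x) (gval y).
Proof. by []. Qed.
Lemma gval_inj : injective (@gval _ _ _ gen).
Proof. exact: val_inj. Qed.
Lemma gval0 : gval (0 : T) = 0. Proof. by []. Qed.
Lemma gvalD (x y : T) : gval (x + y) = gval x + gval y. Proof. by []. Qed.
Definition gsubLie : lieAlgType R.
refine (@LieAlg R T gbr _ _ _ _).
- by move=> a x y z; apply: gval_inj; rewrite !gval_lin !gbr_val lie_linl.
- by move=> a x y z; apply: gval_inj; rewrite !gval_lin !gbr_val lie_linr.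
- by move=> x; apply: gval_inj; rewrite gbr_val lie_alt.
- move=> x y z; apply: gval_inj.
  by rewrite !gvalD !gbr_val lie_jacobi.
Defined.
Lemma gsub_lnorm (x : gsubLie) s :
  gval (lnorm x s) = lnorm (gval x) (map (@gval _ _ _ gen) s).
Proof. by elim: s x => [|a s IH] x //=; rewrite IH. Qed.
Lemma gsub_variety k : in_variety k L -> in_variety k gsubLie.
Proof.
case: k => //= [h x y z t|m h x s hs]; apply: gval_inj.
  by rewrite /= h.
by rewrite gsub_lnorm h // size_map.
Qed.
End SubLie.

Section Gen.
Variables (R : pzRingType) (k : pc_kind) (n : nat) (G : rel 'I_n)
  (L : lieAlgType R) (gen : 'I_n -> L).
Hypothesis hp : pc_presentation k G gen.

Lemma gen_all x : Gen gen x.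
Proof.
case: hp => hv [hrel hup].
pose g' i : gsubLie gen := GSub (asboolT (Gg gen i)).
have [|f [hf hfg _]] := hup (gsubLie gen) g' (gsub_variety gen hv).
  by move=> i j hij; apply: gval_inj; rewrite /= hrel.
have [f0 [_ _ u]] := hup L gen hv hrel.
have e1 := u id (hom_id L) (fun i => erefl).
have hvf : lie_hom (fun x => gval (f x)).
  split=> [a y z|y z]; first by rewrite hf.1.
  by rewrite hf.2.
have e2 := u _ hvf (fun i => congr1 (@gval _ _ _ gen) (hfg i)).
rewrite (e1 x) -(e2 x); exact: asboolW (gvalP (f x)).
Qed.

Lemma hom_ext (L' : lieAlgType R) (f1 f2 : L -> L') :
  lie_hom f1 -> lie_hom f2 -> (forall i, f1 (gen i) = f2 (gen i)) ->
  forall x, f1 x = f2 x.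
Proof.
move=> h1 h2 he x; elim: (gen_all x) => [i||a y z _ e1 _ e2|y z _ e1 _ e2].
- exact: he.
- by rewrite !hom0.
- by rewrite h1.1 h2.1 e1 e2.
- by rewrite h1.2 h2.2 e1 e2.
Qed.

Lemma hom_exists (L' : lieAlgType R) (g' : 'I_n -> L') :
  in_variety k L' -> (forall i j, G i j -> lie_br (g' i) (g' j) = 0) ->
  exists f : L -> L', lie_hom f /\ forall i, f (gen i) = g' i.
Proof.
case: hp => _ [_ hup] hv hr; have [f [hf hg _]] := hup L' g' hv hr.
by exists f.
Qed.
End Gen.

Section Comb.
Variables (R : idomainType) (n : nat) (G : rel 'I_n).
Hypotheses (hn : (1 < n)%N) (hsym : symmetric G) (hconn : graph_connected (compl_graph G)).
Local Notation E := (compl_graph G).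

Lemma E_sym : symmetric E.
Proof. by move=> i j; rewrite /compl_graph eq_sym hsym. Qed.

Lemma E_nbr i : exists j, E i j.
Proof.
have [j hij] : exists j : 'I_n, i != j.
  have h0 : (0 < n)%N by apply: ltn_trans hn.
  have h1 : (1 < n)%N by [].
  case: (eqVneq i (Ordinal h0)) => [->|hne]; last by exists (Ordinal h0).
  by exists (Ordinal h1); apply/eqP => /(congr1 val).
have /connectP [p hp hl] := hconn i j.
case: p hp hl => [|h p] /=; first by move=> _ e; rewrite e eqxx in hij.
by case/andP => hih _ _; exists h.
Qed.

Variables (M1 M2 : ('I_n -> R) -> Prop) (U V : 'I_n -> 'I_n -> R).
Hypotheses (hU : forall i, M1 (U i)) (hV : forall i, M2 (V i))
  (hUV : forall i p, U i p + V i p = (i == p)%:R)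
  (hcomm : forall u v, M1 u -> M2 v -> forall p q, E p q -> u p * v q = u q * v p).

Lemma Voff i j : i != j -> V i j = - U i j.
Proof. by move=> hij; apply/eqP; rewrite -addr_eq0 addrC hUV (negPf hij). Qed.
Lemma Von i : V i i = 1 - U i i.
Proof. by apply/eqP; rewrite eq_sym subr_eq addrC hUV eqxx. Qed.

Lemma Unbr i j : E i j -> U i j = 0.
Proof.
move=> hE; have hij : i != j by case/andP: hE.
have h := hcomm (hU i) (hV i) hE.
rewrite Voff // Von in h.
have -> : U i j = U i j * (1 - U i i) - U i i * (- U i j) by ring.
by rewrite -h subrr.
Qed.

Lemma Tprop i j : E i j -> U i i != 0 -> U j j != 0.
Proof.
move=> hE hT; have h := hcomm (hU i) (hV j) hE.
rewrite (Unbr hE) mul0r in h.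
have /eqP : V j j = 0.
  by have := eqxx (0 : R); rewrite -{1}h mulf_eq0 (negPf hT) /= => /eqP.
by rewrite Von subr_eq0 => /eqP <-; rewrite oner_eq0.
Qed.

Lemma comb_main : (exists i0, U i0 i0 != 0) -> forall v, M2 v -> forall p, v p = 0.
Proof.
case=> i0 hi0 v hv k.
have hT : forall j, U j j != 0.
  move=> j; have /connectP [p hp ->] := hconn i0 j.
  elim: p i0 hi0 hp => [|h p IH] i hi //= /andP [hih hp].
  exact: IH (Tprop hih hi) hp.
have [i hki] := E_nbr k.
have hik : E i k by rewrite E_sym.
have h := hcomm (hU i) hv hik.
rewrite (Unbr hik) mul0r in h.
by have := eqxx (0 : R); rewrite -{1}h mulf_eq0 (negPf (hT i)) /= => /eqP.
Qed.
End Comb.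

Section HAlg.
Variables (R : comPzRingType) (n : nat) (G : rel 'I_n).
Definition HT := ('rV[R]_n * 'M[R]_n)%type.
Definition hbr (x y : HT) : HT :=
  (0, \matrix_(p, q) (if G p q then 0 else x.1 0 p * y.1 0 q - x.1 0 q * y.1 0 p)).

Lemma hbr_0l (x y : HT) : x.1 = 0 -> hbr x y = 0.
Proof.
move=> h; rewrite /hbr h; congr pair; apply/matrixP => p q; rewrite !mxE.
by case: (G p q) => //; ring.
Qed.
Lemma hbr_0r (x y : HT) : y.1 = 0 -> hbr x y = 0.
Proof.
move=> h; rewrite /hbr h; congr pair; apply/matrixP => p q; rewrite !mxE.
by case: (G p q) => //; ring.
Qed.

Lemma HT_lin a (u v : HT) : a *: u + v = (a *: u.1 + v.1, a *: u.2 + v.2).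
Proof. by []. Qed.

Definition Hlie : lieAlgType R.
refine (@LieAlg R HT hbr _ _ _ _).
- move=> a x y z; rewrite !HT_lin /hbr /=; congr pair; first by rewrite scaler0 addr0.
  apply/matrixP => p q; rewrite !mxE; case: (G p q); ring.
- move=> a x y z; rewrite !HT_lin /hbr /=; congr pair; first by rewrite scaler0 addr0.
  apply/matrixP => p q; rewrite !mxE; case: (G p q); ring.
- move=> x; rewrite /hbr /=; congr pair; apply/matrixP => p q; rewrite !mxE.
  case: (G p q); ring.
- by move=> x y z; rewrite /= !(@hbr_0r _ (hbr _ _)) // !addr0.
Defined.

Definition he (i : 'I_n) : Hlie := (delta_mx 0 i, 0).

Lemma Hlie_variety k : (if k is PC_nilpotent m then (1 < m)%N else True) ->
  in_variety k Hlie.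
Proof.
case: k => //= [_ x y z t|m hm x s hs].
  exact: hbr_0l.
case: s hs => [|a [|b s]] /= hs; try by rewrite -hs in hm.
have -> : hbr (hbr x a) b = 0 by apply: hbr_0l.
by elim: s {hs} => //= c s IH; rewrite hbr_0l.
Qed.

Lemma he_rel : symmetric G -> forall i j, G i j -> lie_br (he i) (he j) = 0.
Proof.
move=> hs i j hij; rewrite /= /hbr /=; congr pair; apply/matrixP => p q.
rewrite !mxE; case hG: (G p q) => //.
rewrite eqxx /= -!natrM !mulnb.
have -> : (p == i) && (q == j) = false.
  by apply/negbTE/andP => -[/eqP e1 /eqP e2]; subst; rewrite hij in hG.
have -> : (q == i) && (p == j) = false.
  by apply/negbTE/andP => -[/eqP e1 /eqP e2]; subst; rewrite hs hij in hG.
by rewrite subrr.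
Qed.

Lemma Hcomm (u v : HT) p q : lie_br (u : Hlie) v = 0 -> ~~ G p q ->
  u.1 0 p * v.1 0 q = u.1 0 q * v.1 0 p.
Proof.
move=> h hG; have /(congr1 (fun w : HT => w.2 p q)) := h.
by rewrite /= /hbr /= mxE (negPf hG) mxE => /eqP; rewrite subr_eq0 => /eqP.
Qed.
End HAlg.

Lemma antisym_sum_nat (V : zmodType) (F : nat -> nat -> V) :
  (forall i j, F i j = - F j i) -> (forall i, F i i = 0) -> forall N,
  \sum_(i < N) \sum_(j < N) F i j = 0.
Proof.
move=> hF hd.
elim=> [|N IH]; first by rewrite big_ord0.
rewrite big_ord_recr /= big_ord_recr /= hd addr0.
under eq_bigr => i _ do rewrite big_ord_recr /=.
rewrite big_split /= IH add0r -big_split /=.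
by rewrite big1 ?addr0 // => i _; rewrite hF addNr.
Qed.

Lemma antisym_sum (V : zmodType) N (F : 'I_N -> 'I_N -> V) :
  (forall i j, F i j = - F j i) -> (forall i, F i i = 0) -> \sum_i \sum_j F i j = 0.
Proof.
case: N F => [|N] F hF hd; first by rewrite big_ord0.
pose F' (i j : nat) := F (inord i) (inord j).
have -> : \sum_i \sum_j F i j = \sum_(i < N.+1) \sum_(j < N.+1) F' i j.
  by apply: eq_bigr => i _; apply: eq_bigr => j _; rewrite /F' !inord_val.
by apply: antisym_sum_nat => [i j|i]; rewrite /F' ?hd // hF.
Qed.

Lemma sum_if_eq (V : zmodType) M (c : nat) (hc : (c <= M)%N) (X : 'I_M.+1 -> V) :
  \sum_(k < M.+1) (if c == k then X k else 0) = X (Ordinal (hc : (c < M.+1)%N)).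
Proof.
rewrite (bigD1 (Ordinal (hc : (c < M.+1)%N))) //= eqxx big1 ?addr0 // => k hk.
by rewrite ifN //; apply: contra hk => /eqP e; apply/eqP/val_inj.
Qed.

Lemma rot3 (V : zmodType) N (F : 'I_N -> 'I_N -> 'I_N -> V) :
  \sum_i \sum_j \sum_m F i j m = \sum_j \sum_m \sum_i F i j m.
Proof. by rewrite exchange_big; apply: eq_bigr => j _; rewrite exchange_big. Qed.

Lemma jac_sum (V : zmodType) N (G1 G2 G3 : 'I_N -> 'I_N -> 'I_N -> V) :
  (forall i j m, G1 i j m + G2 j m i + G3 m i j = 0) ->
  \sum_i \sum_j \sum_m G1 i j m + \sum_i \sum_j \sum_m G2 i j m
    + \sum_i \sum_j \sum_m G3 i j m = 0.
Proof.
move=> h.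
have e2 := rot3 (fun i j m => G2 j m i); cbv beta in e2.
have e3 := rot3 (fun i j m => G3 m i j); cbv beta in e3.
have e3' := rot3 (fun j m i => G3 m i j); cbv beta in e3'.
rewrite -e2 -e3' -e3 -!big_split big1 // => i _.
rewrite -!big_split big1 // => j _; rewrite -!big_split big1 // => m _.
exact: h.
Qed.

Lemma minn3 (i a M : nat) : minn (i + minn a M) M = minn (i + a) M.
Proof. lia. Qed.

Section AAlg.
Variables (R : pzRingType) (L : lieAlgType R) (M : nat).
Definition AT := {ffun 'I_M.+1 -> L}.
Definition mn (i j : 'I_M.+1) : nat := minn (i + j) M.
Lemma mn_le i j : (mn i j <= M)%N. Proof. exact: geq_minr. Qed.
Definition abr (f g : AT) : AT :=
  [ffun k : 'I_M.+1 => \sum_i \sum_j (if mn i j == k then lie_br (f i) (g j) else 0)].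

Lemma abr_nested (f g h : AT) k :
  abr f (abr g h) k = \sum_(i < M.+1) \sum_(j < M.+1) \sum_(m < M.+1)
     (if minn (i + j + m) M == k then lie_br (f i) (lie_br (g j) (h m)) else 0).
Proof.
rewrite ffunE; apply: eq_bigr => i _.
have e : forall l : 'I_M.+1,
   (if mn i l == k then lie_br (f i) (abr g h l) else 0) =
   \sum_j \sum_m (if mn j m == l then
        (if mn i l == k then lie_br (f i) (lie_br (g j) (h m)) else 0) else 0).
  move=> l; case: ifP => _; last first.
    by rewrite big1 // => j _; rewrite big1 // => m _; case: ifP.
  rewrite ffunE br_sumr; apply: eq_bigr => j _.
  rewrite br_sumr; apply: eq_bigr => m _; case: ifP => _ //; exact: br0r.
rewrite (eq_bigr _ (fun l _ => e l)) exchange_big /=; apply: eq_bigr => j _.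
rewrite exchange_big /=; apply: eq_bigr => m _.
rewrite (sum_if_eq (mn_le j m)) /mn /= minn3 addnA.
by [].
Qed.

Definition Alie : lieAlgType R.
refine (@LieAlg R AT abr _ _ _ _).
- move=> a x y z; apply/ffunP => k; rewrite !ffunE scaler_sumr -big_split.
  apply: eq_bigr => i _; rewrite scaler_sumr -big_split; apply: eq_bigr => j _.
  rewrite !ffunE; case: ifP => _; [exact: lie_linl | by apply/esym; rewrite scaler0; exact: addr0].
- move=> a x y z; apply/ffunP => k; rewrite !ffunE scaler_sumr -big_split.
  apply: eq_bigr => i _; rewrite scaler_sumr -big_split; apply: eq_bigr => j _.
  rewrite !ffunE; case: ifP => _; [exact: lie_linr | by apply/esym; rewrite scaler0; exact: addr0].
- move=> x; apply/ffunP => k; rewrite !ffunE; apply: antisym_sum => [i j|i].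
    rewrite /mn addnC; case: ifP => _; [exact: br_anti | by rewrite oppr0].
  by case: ifP => _; rewrite ?lie_alt.
- move=> x y z; apply/ffunP => k.
  have e3 : forall u v w : AT, (u + v + w) k = u k + v k + w k by move=> *; rewrite !ffunE.
  rewrite e3 !abr_nested ffunE.
  apply: jac_sum => i j m.
  have -> : minn (j + m + i) M = minn (i + j + m) M by rewrite addnC addnA.
  have -> : minn (m + i + j) M = minn (i + j + m) M by rewrite [(m + i)%N]addnC -addnA [(m + j)%N]addnC addnA.
  case: ifP => _; [exact: lie_jacobi | by rewrite !addr0].
Defined.
End AAlg.

Section Ev.
Variables (R : pzRingType) (L : lieAlgType R) (M : nat).
Definition ev1 (f : Alie L M) : L := \sum_k f k.
Lemma ev1_hom : lie_hom ev1.
Proof.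
split=> [a f g|f g]; rewrite /ev1.
  rewrite scaler_sumr -big_split; apply: eq_bigr => k _; by rewrite !ffunE.
have -> : \sum_k (lie_br f g : Alie L M) k =
   \sum_(k < M.+1) \sum_(i < M.+1) \sum_(j < M.+1) (if mn i j == k then lie_br (f i) (g j) else 0).
  by apply: eq_bigr => k _; rewrite /= ffunE.
rewrite rot3 br_suml; apply: eq_bigr => i _; rewrite br_sumr; apply: eq_bigr => j _.
by rewrite (sum_if_eq (mn_le i j)).
Qed.
Lemma abrE (f g : Alie L M) k :
  (lie_br f g) k = \sum_(i < M.+1) \sum_(j < M.+1) (if mn i j == k then lie_br (f i) (g j) else 0).
Proof. by rewrite /= ffunE. Qed.
End Ev.

Definition brsum (R : pzRingType) (L : lieAlgType R) (s : seq (L * L)) : L :=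
  \sum_(p <- s) lie_br p.1 p.2.

Section PCall.
Variables (R : pzRingType) (n : nat) (G : rel 'I_n)
  (L : lieAlgType R) (gen : 'I_n -> L).
Hypothesis hp : pc_presentation PC_all G gen.

Definition delta1 M (x : L) : Alie L M := [ffun k : 'I_M.+1 => if (k : nat) == 1%N then x else 0].

Definition isPhi M (Phi : L -> Alie L M) :=
  lie_hom Phi /\ forall i, Phi (gen i) = delta1 M (gen i).

Lemma Phi_exists M : exists Phi, @isPhi M Phi.
Proof.
have [|f [hf hg]] := hom_exists hp (L' := Alie L M) (g' := fun i => delta1 M (gen i)) I.
  move=> i j hij; apply/ffunP => k; rewrite abrE ffunE big1 // => a _.
  rewrite big1 // => b _; rewrite !ffunE.
  case: ifP => // _; case: ifP => _; case: ifP => _;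
    rewrite ?br0l ?br0r //; by case: hp => _ [-> ].
by exists f.
Qed.

Definition degP (x : L) := exists N, forall M, (0 < M)%N -> forall Phi, @isPhi M Phi ->
  forall k : 'I_M.+1, ((k : nat) == 0%N) || (N <= k)%N -> Phi x k = 0.

Lemma degP_all x : degP x.
Proof.
elim: (gen_all hp x) => [i||a y z _ [N1 h1] _ [N2 h2]|y z _ [N1 h1] _ [N2 h2]].
- exists 2%N => M hM Phi [hPhi hg] k hk; rewrite hg ffunE.
  by case: ifP => // /eqP e; move: hk; rewrite e.
- by exists 0%N => M hM Phi [hPhi _] k _; rewrite hom0 // ffunE.
- exists (maxn N1 N2) => M hM Phi [hPhi hg] k hk; rewrite hPhi.1 !ffunE.
  rewrite h1 ?h2 ?scaler0 ?addr0 //.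
    by case/orP: hk => [->//|]; rewrite geq_max => /andP [_ ->]; rewrite orbT.
  by case/orP: hk => [->//|]; rewrite geq_max => /andP [-> _]; rewrite orbT.
- exists (N1 + N2)%N => M hM Phi hP k hk; rewrite hP.1.2 abrE big1 // => i _.
  rewrite big1 // => j _; case: ifP => // /eqP e.
  have [hi|hi] := boolP (((i : nat) == 0%N) || (N1 <= i)%N); first by rewrite h1 ?br0l.
  have [hj|hj] := boolP (((j : nat) == 0%N) || (N2 <= j)%N); first by rewrite h2 ?br0r.
  exfalso; move: hk hi hj e; rewrite /mn; lia.
Qed.

Lemma Phi0 M (hM : (0 < M)%N) Phi (hP : @isPhi M Phi) x : Phi x ord0 = 0.
Proof. by have [N h] := degP_all x; apply: h. Qed.

Lemma ev1_Phi M (hM : (0 < M)%N) Phi (hP : @isPhi M Phi) x : ev1 (Phi x) = x.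
Proof.
have hh : lie_hom (fun x => ev1 (Phi x)) := hom_comp hP.1 (@ev1_hom _ _ _).
apply: (hom_ext hp hh (hom_id L)) => i /=; rewrite hP.2 /ev1.
rewrite (bigD1 (Ordinal (hM : (1 < M.+1)%N))) //= ffunE /= big1 ?addr0 // => k hk.
by rewrite ffunE ifN //; apply: contra hk => /eqP e; apply/eqP/val_inj.
Qed.

Variable S : L -> Prop.
Hypothesis hS : forall z, S z -> exists s : seq (L * L),
  (forall p, p \in s -> S p.1 /\ S p.2) /\ z = brsum s.

Lemma Ord_S M (hM : (0 < M)%N) Phi (hP : @isPhi M Phi) k : (k <= M)%N ->
  forall z, S z -> forall l : 'I_M.+1, (l < k)%N -> Phi z l = 0.
Proof.
elim: k => // k IH hk z hz l hl.
have [s [hs ->]] := hS hz; rewrite /brsum (hom_sum hP.1) sum_ffunE big_seq big1 // => p hps.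
have [h1 h2] := hs p hps.
rewrite hP.1.2 abrE big1 // => i _; rewrite big1 // => j _.
case: ifP => // /eqP e.
have [hi|hi] := boolP (i < k)%N; first by rewrite (IH (ltnW hk) _ h1) ?br0l.
have [hj|hj] := boolP ((j : nat) == 0%N).
  have -> : j = ord0 by apply/val_inj/eqP.
  by rewrite (Phi0 hM hP) br0r.
exfalso; move: hk hl hi hj e; rewrite /mn; lia.
Qed.

Lemma S_zero z : S z -> z = 0.
Proof.
move=> hz; have [N hN] := degP_all z.
have hM : (0 < N.+1)%N by [].
have [Phi hP] := Phi_exists N.+1.
have e : Phi z = 0.
  apply/ffunP => l; rewrite ffunE.
  have [hl|hl] := boolP (l < N.+1)%N; first exact: (Ord_S hM hP (leqnn _) hz).
  apply: (hN _ hM _ hP); move: hl; rewrite -leqNgt => hl; apply/orP; right; lia.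
by rewrite -(ev1_Phi hM hP z) e /ev1 big1 // => k _; rewrite ffunE.
Qed.
End PCall.

Lemma jac0 (R : pzRingType) (L : lieAlgType R) (g u v : L) :
  lie_br g u = 0 -> lie_br g v = 0 -> lie_br g (lie_br u v) = 0.
Proof.
move=> hu hv; have := lie_jacobi g u v.
rewrite (br_anti v g) hv oppr0 br0r addr0 hu br0r addr0 => ->.
by [].
Qed.

Section Main.
Variables (R : idomainType) (n : nat) (G : rel 'I_n) (k : pc_kind)
    (L : lieAlgType R) (gen : 'I_n -> L).
Hypotheses (hn : (1 < n)%N) (hsym : symmetric G)
  (hm : if k is PC_nilpotent m then (1 < m)%N else True)
  (hp : pc_presentation k G gen).

Lemma phi_exists : exists phi : L -> Hlie R G,
  lie_hom phi /\ forall i, phi (gen i) = he R G i.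
Proof. exact: (hom_exists hp (Hlie_variety R G hm) (he_rel R hsym)). Qed.

Lemma gen_neq0 i : gen i <> 0.
Proof.
have [phi [hphi hg]] := phi_exists => e.
have := congr1 (fun w : Hlie R G => w.1 0 i) (hg i).
by rewrite e (hom0 hphi) /he /= !mxE !eqxx /= => /esym/eqP; rewrite oner_eq0.
Qed.

Lemma zero_hom (L' : lieAlgType R) : lie_hom (fun _ : L => (0 : L')).
Proof. by split=> [a x y|x y]; rewrite ?scaler0 ?addr0 ?br0l. Qed.

Lemma dir_back : ~ graph_connected (compl_graph G) ->
  exists L1 L2 : L -> Prop,
      [/\ lie_direct_sum L1 L2,
          (exists x, L1 x /\ x <> 0) &
          (exists x, L2 x /\ x <> 0)].
Proof.
move=> hnc; set E := compl_graph G.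
have [i0 [j0 hij]] : exists i0 j0, ~~ connect E i0 j0.
  case: (boolP [forall i, forall j, connect E i j]) => h.
    by exfalso; apply: hnc => i j; exact: (forallP (forallP h i) j).
  move: h; rewrite negb_forall => /existsP [i0]; rewrite negb_forall => /existsP [j0 h].
  by exists i0, j0.
pose A1 l := connect E i0 l.
have hcross : forall p q, A1 p -> ~~ A1 q -> G p q.
  move=> p q hp1 hq1; apply/negPn/negP => hG.
  have hpq : p != q by apply/eqP => epq; move: hq1; rewrite -epq hp1.
  move/negP: hq1; apply.
  apply: connect_trans hp1 (connect1 _); by rewrite /E /compl_graph hpq hG.
have hv := hp.1; have hrel := hp.2.1.
have [|p1 [hp1 hp1g]] := hom_exists hp (L' := L) (g' := fun l => if A1 l then gen l else 0) hv
  ; first by move=> i j hG /=; case: ifP => ai; case: ifP => aj; rewrite ?br0l ?br0r //; exact: hrel.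
have [|p2 [hp2 hp2g]] := hom_exists hp (L' := L) (g' := fun l => if A1 l then 0 else gen l) hv
  ; first by move=> i j hG /=; case: ifP => ai; case: ifP => aj; rewrite ?br0l ?br0r //; exact: hrel.
have C1 : forall l, A1 l -> forall y, lie_br (gen l) (p2 y) = 0.
  move=> l hl y; elim: (gen_all hp y) => [i||a y1 y2 _ e1 _ e2|y1 y2 _ e1 _ e2].
  - rewrite hp2g; case: ifP => hi; first exact: br0r.
    by apply: hrel; apply: hcross => //; rewrite hi.
  - by rewrite hom0 // br0r.
  - by rewrite hp2.1 lie_linr e1 e2 scaler0 addr0.
  - by rewrite hp2.2; apply: jac0.
have C2 : forall x y, lie_br (p1 x) (p2 y) = 0.
  move=> x y; elim: (gen_all hp x) => [i||a y1 y2 _ e1 _ e2|y1 y2 _ e1 _ e2].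
  - by rewrite hp1g; case: ifP => hi; [exact: C1 | exact: br0l].
  - by rewrite hom0 // br0l.
  - by rewrite hp1.1 lie_linl e1 e2 scaler0 addr0.
  - rewrite hp1.2 br_anti jac0 ?oppr0 //.
      by rewrite br_anti e1 oppr0.
    by rewrite br_anti e2 oppr0.
have C2' : forall x y, lie_br (p2 y) (p1 x) = 0.
  by move=> x y; rewrite br_anti C2 oppr0.
have hs : lie_hom (fun x => p1 x + p2 x).
  split=> [a x y|x y]; first by rewrite hp1.1 hp2.1 scalerDr addrACA.
  by rewrite hp1.2 hp2.2 brDl !brDr C2 C2' addr0 add0r.
have C3 : forall x, p1 x + p2 x = x.
  apply: (hom_ext hp hs (hom_id L)) => i /=; rewrite hp1g hp2g.
  by case: ifP; rewrite ?addr0 ?add0r.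
have C4 : forall x, p1 (p2 x) = 0.
  apply: (hom_ext hp (hom_comp hp2 hp1) (zero_hom L)) => i /=; rewrite hp2g.
  by case: ifP => hi; rewrite ?hom0 // hp1g hi.
have C5 : forall x, p2 (p1 x) = 0.
  apply: (hom_ext hp (hom_comp hp1 hp2) (zero_hom L)) => i /=; rewrite hp1g.
  by case: ifP => hi; rewrite ?hom0 // hp2g hi.
exists (fun x => p1 x = x), (fun x => p2 x = x); split.
- split.
  + split; first by rewrite hom0.
      by move=> a x y e1 e2; rewrite hp1.1 e1 e2.
    by move=> x y e1 e2; rewrite hp1.2 e1 e2.
  + split; first by rewrite hom0.
      by move=> a x y e1 e2; rewrite hp2.1 e1 e2.
    by move=> x y e1 e2; rewrite hp2.2 e1 e2.
  + move=> x; exists (p1 x), (p2 x); split; last by rewrite C3.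
      by have := C3 (p1 x); rewrite C5 addr0.
    by have := C3 (p2 x); rewrite C4 add0r.
  + by move=> x e1 e2; rewrite -e1 -e2 C4.
  + by move=> x y e1 e2; rewrite -e1 -e2 C2.
- exists (gen i0); split; last exact: gen_neq0.
  by rewrite hp1g /A1 connect0.
- exists (gen j0); split; last exact: gen_neq0.
  by rewrite hp2g /A1 (negPf hij).
Qed.
End Main.

Lemma subalg_lin (R : pzRingType) (L : lieAlgType R) (S : L -> Prop) :
  lie_subalg S -> forall x y, S x -> S y -> S (x + y).
Proof. by case=> _ h _ x y hx hy; have := h 1 x y hx hy; rewrite scale1r. Qed.

Lemma subalg_sub (R : pzRingType) (L : lieAlgType R) (S : L -> Prop) :
  lie_subalg S -> forall x y, S x -> S y -> S (x - y).
Proof.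
case=> _ h _ x y hx hy; have := h (-1) y x hy hx.
by rewrite scaleN1r addrC.
Qed.

Lemma brsum_in (R : pzRingType) (L : lieAlgType R) (S : L -> Prop) (s : seq (L * L)) :
  lie_subalg S -> (forall p, p \in s -> S p.1 /\ S p.2) -> S (brsum s).
Proof.
move=> hS; elim: s => [|p s IH] hs; first by rewrite /brsum big_nil; case: hS.
rewrite /brsum big_cons; apply: subalg_lin => //.
  have [h1 h2] := hs p (mem_head _ _); by case: hS => _ _ h; apply: h.
by apply: IH => q hq; apply: hs; rewrite in_cons hq orbT.
Qed.

Lemma ds_swap (R : pzRingType) (L : lieAlgType R) (L1 L2 : L -> Prop) :
  lie_direct_sum L1 L2 -> lie_direct_sum L2 L1.
Proof.
case=> h1 h2 h3 h4 h5; split => //.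
- by move=> x; have [y [z [hy hz e]]] := h3 x; exists z, y; rewrite addrC.
- by move=> x a b; apply: h4.
- by move=> x y hx hy; rewrite br_anti h5 ?oppr0.
Qed.

Lemma brsum_split (R : pzRingType) (L : lieAlgType R) (L1 L2 : L -> Prop) :
  lie_direct_sum L1 L2 -> forall s : seq (L * L), exists s1 s2,
  [/\ (forall p, p \in s1 -> L1 p.1 /\ L1 p.2),
      (forall p, p \in s2 -> L2 p.1 /\ L2 p.2) & brsum s = brsum s1 + brsum s2].
Proof.
move=> hds; have [_ _ h3 _ h5] := hds.
elim=> [|p s [s1 [s2 [hs1 hs2 e]]]].
  by exists [::], [::]; split => //; rewrite /brsum !big_nil addr0.
have [a1 [a2 [ha1 ha2 ea]]] := h3 p.1.
have [b1 [b2 [hb1 hb2 eb]]] := h3 p.2.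
exists ((a1, b1) :: s1), ((a2, b2) :: s2); split.
- move=> q; rewrite in_cons => /orP [/eqP -> //|]; exact: hs1.
- move=> q; rewrite in_cons => /orP [/eqP -> //|]; exact: hs2.
rewrite /brsum !big_cons -/(brsum s) -/(brsum s1) -/(brsum s2) e /= ea eb.
rewrite brDl !brDr (h5 a1 b2 ha1 hb2) (br_anti a2 b1) (h5 b1 a2 hb1 ha2) oppr0 addr0 add0r.
by rewrite addrACA.
Qed.

Lemma span_decomp (R : pzRingType) k n (G : rel 'I_n) (L : lieAlgType R) (gen : 'I_n -> L) :
  pc_presentation k G gen -> forall x,
  exists c : 'I_n -> R, exists s : seq (L * L), x = \sum_i c i *: gen i + brsum s.
Proof.
move=> hp x; elim: (gen_all hp x) => [i||a y z _ [c1 [s1 e1]] _ [c2 [s2 e2]]|y z _ _ _ _].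
- exists (fun j => (i == j)%:R), [::]; rewrite /brsum big_nil addr0.
  rewrite (bigD1 i) //= eqxx scale1r big1 ?addr0 // => j hj.
  by rewrite eq_sym (negPf hj) scale0r.
- exists (fun _ => 0), [::]; rewrite /brsum big_nil addr0 big1 // => i _.
  by rewrite scale0r.
- exists (fun j => a * c1 j + c2 j), (map (fun p => (a *: p.1, p.2)) s1 ++ s2).
  rewrite e1 e2 /brsum big_cat big_map /=.
  have -> : \sum_(p <- s1) lie_br (a *: p.1) p.2 = a *: \sum_(p <- s1) lie_br p.1 p.2.
    by rewrite scaler_sumr; apply: eq_bigr => p _; rewrite brZl.
  rewrite scalerDr scaler_sumr.
  have -> : \sum_i (a * c1 i + c2 i) *: gen i =
      \sum_i a *: (c1 i *: gen i) + \sum_i c2 i *: gen i.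
    by rewrite -big_split; apply: eq_bigr => i _; rewrite scalerDl scalerA.
  by rewrite -/(brsum s1) -/(brsum s2) addrACA.
- exists (fun _ => 0), [:: (y, z)].
  rewrite /brsum big_cons big_nil addr0 big1 ?add0r // => i _.
  by rewrite scale0r.
Qed.

Lemma lnorm_rcons (R : pzRingType) (L : lieAlgType R) (x b : L) s :
  lnorm x (rcons s b) = lie_br (lnorm x s) b.
Proof. by rewrite /lnorm foldl_rcons. Qed.

Section Core.
Variables (R : idomainType) (k : pc_kind) (n : nat) (G : rel 'I_n)
  (L : lieAlgType R) (gen : 'I_n -> L).
Hypothesis hp : pc_presentation k G gen.
Variables (phi : L -> Hlie R G).
Hypotheses (hphi : lie_hom phi) (hg : forall i, phi (gen i) = he R G i).

Lemma fst_sum I (r : seq I) (P : pred I) (F : I -> Hlie R G) :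
  (\sum_(i <- r | P i) F i).1 = \sum_(i <- r | P i) (F i).1.
Proof. exact: (big_morph fst (fun u v => erefl) erefl). Qed.

Lemma phi_entry (c : 'I_n -> R) s j :
  (phi (\sum_i c i *: gen i + brsum s)).1 0 j = c j.
Proof.
have eb : (phi (brsum s)).1 = 0.
  by rewrite /brsum (hom_sum hphi) fst_sum big1 // => p _; rewrite (homBr hphi).
rewrite (homD hphi) /= eb addr0 (hom_sum hphi).
rewrite fst_sum summxE (bigD1 j) //= big1 ?addr0.
  by rewrite homZ // hg /= !mxE !eqxx mulr1.
by move=> i hij; rewrite homZ // hg /= !mxE eqxx /= eq_sym (negPf hij) mulr0.
Qed.

Variables (L1 L2 : L -> Prop).
Hypothesis hds : lie_direct_sum L1 L2.
Hypothesis hvec : forall z, L2 z -> forall j, (phi z).1 0 j = 0.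

Lemma L2_brsum z : L2 z -> exists s : seq (L * L),
  (forall p, p \in s -> L2 p.1 /\ L2 p.2) /\ z = brsum s.
Proof.
move=> hz; have [c [s e]] := span_decomp hp z.
have hc : forall j, c j = 0 by move=> j; rewrite -(phi_entry c s j) -e hvec.
have {}e : z = brsum s.
  by rewrite e big1 ?add0r // => i _; rewrite hc scale0r.
have [s1 [s2 [hs1 hs2 e']]] := brsum_split hds s.
have [hsub1 hsub2 _ hint _] := hds.
have hB1 : L1 (brsum s1) := brsum_in hsub1 hs1.
have hB2 : L2 (brsum s2) := brsum_in hsub2 hs2.
have hB1' : L2 (brsum s1).
  have -> : brsum s1 = z - brsum s2 by rewrite e e' addrK.
  exact: subalg_sub.
exists s2; split => //; by rewrite e e' (hint _ hB1 hB1') add0r.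
Qed.

Lemma L2_lnorm t z : L2 z -> exists ls : seq (L * seq L),
  (forall q, q \in ls -> size q.2 = t) /\ z = \sum_(q <- ls) lnorm q.1 q.2.
Proof.
elim: t z => [|t IH] z hz.
  exists [:: (z, [::])]; split; first by move=> q; rewrite inE => /eqP ->.
  by rewrite big_cons big_nil addr0.
have [s [hs ->]] := L2_brsum hz.
elim: s hs => [|p s IHs] hs.
  by exists [::]; split => //; rewrite /brsum !big_nil.
have [h1 h2] := hs p (mem_head _ _).
have [ls1 [hl1 e1]] := IH _ h1.
have [ls2 [hl2 e2]] : exists ls : seq (L * seq L),
    (forall q, q \in ls -> size q.2 = t.+1) /\ brsum s = \sum_(q <- ls) lnorm q.1 q.2.
  by apply: IHs => q hq; apply: hs; rewrite in_cons hq orbT.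
exists (map (fun q => (q.1, rcons q.2 p.2)) ls1 ++ ls2); split.
  move=> q; rewrite mem_cat => /orP [/mapP [q' hq' ->]|]; last exact: hl2.
  by rewrite /= size_rcons hl1.
rewrite /brsum big_cons -/(brsum s) e2 big_cat big_map /= e1 br_suml.
by congr (_ + _); apply: eq_bigr => q _; rewrite lnorm_rcons.
Qed.

End Core.

Lemma core (R : idomainType) (k : pc_kind) (n : nat) (G : rel 'I_n)
  (L : lieAlgType R) (gen : 'I_n -> L) (hp : pc_presentation k G gen)
  (phi : L -> Hlie R G) (hphi : lie_hom phi) (hg : forall i, phi (gen i) = he R G i)
  (L1 L2 : L -> Prop) (hds : lie_direct_sum L1 L2)
  (hvec : forall z, L2 z -> forall j, (phi z).1 0 j = 0) :
  forall z, L2 z -> z = 0.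
Proof.
move=> z hz; have hv := hp.1.
have hb := L2_brsum hp hphi hg hds hvec.
have hl := L2_lnorm hp hphi hg hds hvec.
move: hv hb hl; case: k hp => [hp' _ hb _|hp' hv hb _|m hp' hv _ hl].
- apply: (S_zero hp' _ hz) => y hy; exact: hb.
- have [s [hs ->]] := hb _ hz; rewrite /brsum big_seq big1 // => p hps.
  have [h1 h2] := hs p hps.
  have [s1 [_ ->]] := hb _ h1; have [s2 [_ ->]] := hb _ h2.
  rewrite /brsum br_suml big1 // => q _; rewrite br_sumr big1 // => r _.
  try exact: hv.
- have [ls [hls ->]] := hl m _ hz; rewrite big_seq big1 // => q hq.
  by apply: hv; exact: hls.
Qed.

Lemma dir_fwd (R : idomainType) (n : nat) (G : rel 'I_n) (k : pc_kind)
    (L : lieAlgType R) (gen : 'I_n -> L) :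
  (1 < n)%N -> symmetric G ->
  (if k is PC_nilpotent m then (1 < m)%N else True) ->
  pc_presentation k G gen ->
  (exists L1 L2 : L -> Prop,
      [/\ lie_direct_sum L1 L2,
          (exists x, L1 x /\ x <> 0) &
          (exists x, L2 x /\ x <> 0)]) ->
  ~ graph_connected (compl_graph G).
Proof.
move=> hn hsym hm hp [L1 [L2 [hds [x1 [h1 n1]] [x2 [h2 n2]]]]] hconn.
have [phi [hphi hg]] := phi_exists hsym hm hp.
have hd : forall i, exists yz : L * L,
    [/\ L1 yz.1, L2 yz.2 & gen i = yz.1 + yz.2].
  move=> i; have [_ _ h3 _ _] := hds.
  by have [y [z [hy hz e]]] := h3 (gen i); exists (y, z).
have [f hf] := fin_all_exists hd.
pose vec (x : L) := fun p => (phi x).1 0 p.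
pose U i := vec (f i).1; pose V i := vec (f i).2.
pose M1 u := exists y, L1 y /\ u = vec y.
pose M2 u := exists y, L2 y /\ u = vec y.
have hU : forall i, M1 (U i) by move=> i; exists (f i).1; case: (hf i).
have hV : forall i, M2 (V i) by move=> i; exists (f i).2; case: (hf i).
have hUV : forall i p, U i p + V i p = (i == p)%:R.
  move=> i p; have [_ _ e] := hf i; rewrite /U /V /vec.
  have := congr1 (fun x => (phi x).1 0 p) e; rewrite (homD hphi) /= mxE => <-.
  by rewrite hg /= mxE eqxx /= eq_sym.
have hcomm : forall u v, M1 u -> M2 v -> forall p q, compl_graph G p q ->
    u p * v q = u q * v p.
  move=> u v [y [hy ->]] [z [hz ->]] p q /andP [_ hG]; rewrite /vec.
  apply: Hcomm hG; rewrite -(homBr hphi).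
  by have [_ _ _ _ h5] := hds; rewrite h5 // (hom0 hphi).
have [hex|hnex] := boolP [exists i0, U i0 i0 != 0].
  have hall := comb_main hn hsym hconn hU hV hUV hcomm.
  have hvec : forall z, L2 z -> forall j, (phi z).1 0 j = 0.
    move=> z hz j; apply: (hall _ (vec z) _ j); first by apply/existsP.
    by exists z.
  exact: n2 (core hp hphi hg hds hvec h2).
have h0 : (0 < n)%N by apply: ltn_trans hn.
have hall := comb_main hn hsym hconn (M1 := M2) (M2 := M1) (U := V) (V := U) hV hU
  (fun i p => ltac:(by rewrite addrC hUV))
  (fun u v hu hv p q hE => ltac:(by rewrite mulrC [RHS]mulrC;
      apply/esym; apply: hcomm => //; rewrite (E_sym hsym))).
have hvec : forall z, L1 z -> forall j, (phi z).1 0 j = 0.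
  move=> z hz j; apply: (hall _ (vec z) _ j); last by exists z.
  exists (Ordinal h0); move: hnex; rewrite negb_exists => /forallP /(_ (Ordinal h0)).
  rewrite negbK => /eqP hU0.
  have e := hUV (Ordinal h0) (Ordinal h0); rewrite hU0 add0r eqxx in e; by rewrite e oner_eq0.
exact: n1 (core hp hphi hg (ds_swap hds) hvec h1).
Qed.

Theorem theorem3 (R : idomainType) (n : nat) (G : rel 'I_n) (k : pc_kind)
    (L : lieAlgType R) (gen : 'I_n -> L) :
  (1 < n)%N -> symmetric G -> irreflexive G ->
  (if k is PC_nilpotent m then (1 < m)%N else True) ->
  pc_presentation k G gen ->
  (exists L1 L2 : L -> Prop,
      [/\ lie_direct_sum L1 L2,
          (exists x, L1 x /\ x <> 0) &
          (exists x, L2 x /\ x <> 0)])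
  <-> ~ graph_connected (compl_graph G).
Proof.
move=> hn hsym hirr hm hp; split; [exact: (dir_fwd hn hsym hm hp) | exact: (dir_back hsym hm hp)].
Qed.
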